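(* Let $f\colon\mathbb{R}^n\to\mathbb{R}$ be continuous and suppose there is $\gamma>0$ such that (i) the set $S_\gamma=\{z\in\mathbb{R}^n : f(z)\le\inf f+\gamma\}$ is compact, and (ii) every $x\in S_\gamma$ with $0\in\partial f(x)$ is a global minimizer of $f$. Let the MAD parameters $x^1\in\mathbb{R}^n$, $\alpha$, $t_1,\tau,T\in(0,\infty)$, $\eta_-\in(0,1)$, $\eta_+>1$, $\theta\in(0,1)$, $\delta>0$, $g^0\in\mathbb{R}^n$ satisfy $\alpha\in(1-\sqrt{\eta_-},1+\sqrt{\eta_-})$, and suppose there is a global minimizer $x^\star$ of $f$ with $t_1\ge\tau$ and $T\ge t_1\ge\|x^\star-x^1\|^2/(2\gamma)$. Let $\{x^k\},\{t_k\}$ be generated by MAD (described in the context). If the sequence $\{u(x^k,t_k)\}$ is monotonically decreasing, then $\{x^k\}$ is bounded.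
   Context: For $t>0$, $\operatorname{prox}_{tf}(x)=\operatorname{argmin}_{z}\big(f(z)+\frac{1}{2t}\|z-x\|^2\big)$ and $u(x,t)=\inf_{z}\big(f(z)+\frac{1}{2t}\|z-x\|^2\big)$. The subdifferential $\partial f(\bar x)$ is the set of all $v$ with $f(x)\ge f(\bar x)+\langle v,x-\bar x\rangle+o(\|x-\bar x\|)$ as $x\to\bar x$. MAD: for $k=1,2,\dots$: choose $\hat x^k\in\operatorname{prox}_{t_kf}(x^k)$; set $g^k=(x^k-\hat x^k)/t_k$; set $x^{k+1}=x^k-\alpha t_kg^k$; set $t_{k+1}=\min(\eta_+t_k,T)$ if $\|g^k\|\le\theta\|g^{k-1}\|+\delta$, and $t_{k+1}=\max(\eta_-t_k,\tau)$ otherwise. *)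

(* Defs.v *)
From HB Require Import structures.
From mathcomp Require Import all_boot all_order all_algebra.
From mathcomp Require Import all_classical all_reals all_analysis.
Set Implicit Arguments. Unset Strict Implicit. Unset Printing Implicit Defensive.
Import Order.TTheory GRing.Theory Num.Theory.
Import numFieldNormedType.Exports.
Local Open Scope classical_set_scope.
Local Open Scope ring_scope.

Section MADDefs.
Variables (R : realType) (n : nat).
Notation vec := 'rV[R]_n.

Definition dotv (u v : vec) : R := \sum_(i < n) u ord0 i * v ord0 i.
Definition enorm (u : vec) : R := Num.sqrt (dotv u u).

Definition finf (f : vec -> R) : R := inf [set f z | z in [set: vec]].

Definition sublevel (f : vec -> R) (gamma : R) : set vec :=
  [set z | f z <= finf f + gamma].

Definition global_minimizer (f : vec -> R) (x : vec) : Prop :=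
  forall z, f x <= f z.

(* (Frechet) subdifferential: v \in \partial f(xb) iff
   f x >= f xb + <v, x - xb> + o(||x - xb||) as x -> xb,
   written out with epsilon-delta. *)
Definition subdiff (f : vec -> R) (xb v : vec) : Prop :=
  forall eps : R, 0 < eps -> exists2 d : R, 0 < d &
    forall x : vec, enorm (x - xb) < d ->
      f xb + dotv v (x - xb) - eps * enorm (x - xb) <= f x.

Definition prox_obj (f : vec -> R) (t : R) (x z : vec) : R :=
  f z + (enorm (z - x)) ^+ 2 / (2 * t).

Definition in_prox (f : vec -> R) (t : R) (x xh : vec) : Prop :=
  forall z, prox_obj f t x xh <= prox_obj f t x z.

Definition moreau (f : vec -> R) (x : vec) (t : R) : R :=
  inf [set prox_obj f t x z | z in [set: vec]].

(* The MAD iteration, for k >= 1, with g 0 = g^0 given and x 1 = x^1, t 1 = t_1. *)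
Definition MAD_step (f : vec -> R) (alpha eta_m eta_p theta delta tau T : R)
    (x xh g : nat -> vec) (t : nat -> R) (k : nat) : Prop :=
  [/\ in_prox f (t k) (x k) (xh k),
      g k = (t k)^-1 *: (x k - xh k),
      x k.+1 = x k - (alpha * t k) *: g k &
      t k.+1 = if enorm (g k) <= theta * enorm (g k.-1) + delta
               then Num.min (eta_p * t k) T
               else Num.max (eta_m * t k) tau].

End MADDefs.

(* Main.v *)
Require Import Defs.
From HB Require Import structures.
From mathcomp Require Import all_boot all_order all_algebra.
From mathcomp Require Import all_classical all_reals all_analysis.
From mathcomp Require Import ring lra.
Import Order.TTheory GRing.Theory Num.Theory.
Import numFieldNormedType.Exports.
Local Open Scope classical_set_scope.
Local Open Scope ring_scope.

Section Helpers.
Context {R : realType} {n : nat}.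

Lemma dotv_ge0 (v : 'rV[R]_n) : 0 <= dotv v v.
Proof. by apply: sumr_ge0 => i _; rewrite -expr2 sqr_ge0. Qed.

Lemma enorm_sq (v : 'rV[R]_n) : enorm v ^+ 2 = dotv v v.
Proof. by rewrite /enorm sqr_sqrtr // dotv_ge0. Qed.

Lemma enorm_ge0 (v : 'rV[R]_n) : 0 <= enorm v.
Proof. exact: sqrtr_ge0. Qed.

Lemma sq_bound (e C : R) : 0 <= e -> e ^+ 2 <= C -> e <= 1 + C.
Proof. move=> e0 eC; rewrite expr2 in eC; nra. Qed.

Lemma comp_le (v : 'rV[R]_n) i : `|v ord0 i| <= `|v|.
Proof.
have -> : `|v| = mx_norm v by []. rewrite mx_normrE.
exact: (le_bigmax _ (fun ij : 'I_1 * 'I_n => `|v ij.1 ij.2|) (ord0, i)).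
Qed.

Lemma norm_le_enorm (v : 'rV[R]_n) : `|v| <= enorm v.
Proof.
have -> : `|v| = mx_norm v by []. rewrite mx_normrE.
apply: bigmax_le => [|[i j] _]; first exact: enorm_ge0.
rewrite /= (ord1 i) -sqrtr_sqr /enorm ler_sqrt ?dotv_ge0 //.
rewrite /dotv (bigD1 j) //= expr2 lerDl.
by apply: sumr_ge0 => k _; rewrite -expr2 sqr_ge0.
Qed.

Lemma enorm_le_norm (v : 'rV[R]_n) : enorm v <= 1 + n%:R * `|v| ^+ 2.
Proof.
apply: sq_bound; first exact: enorm_ge0.
rewrite enorm_sq /dotv.
have -> : n%:R * `|v| ^+ 2 = \sum_(i < n) `|v| ^+ 2.
  by rewrite sumr_const card_ord mulr_natl.
apply: ler_sum => i _; rewrite -expr2 -real_normK ?num_real //.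
by rewrite lerXn2r ?nnegrE ?normr_ge0 ?comp_le.
Qed.

End Helpers.

Theorem lemma7 (R : realType) (n : nat) (f : 'rV[R]_n -> R) (gamma : R)
  (alpha eta_m eta_p theta delta tau T : R) (xs : 'rV[R]_n)
  (x xh g : nat -> 'rV[R]_n) (t : nat -> R) :
  continuous f ->
  0 < gamma ->
  compact (sublevel f gamma) ->
  (forall z, sublevel f gamma z -> subdiff f z 0 -> global_minimizer f z) ->
  0 < alpha -> 0 < t 1%N -> 0 < tau -> 0 < T ->
  0 < eta_m < 1 -> 1 < eta_p -> 0 < theta < 1 -> 0 < delta ->
  1 - Num.sqrt eta_m < alpha < 1 + Num.sqrt eta_m ->
  global_minimizer f xs ->
  tau <= t 1%N -> t 1%N <= T ->
  (enorm (xs - x 1%N)) ^+ 2 / (2 * gamma) <= t 1%N ->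
  (forall k, (1 <= k)%N -> MAD_step f alpha eta_m eta_p theta delta tau T x xh g t k) ->
  (forall k, (1 <= k)%N -> moreau f (x k.+1) (t k.+1) <= moreau f (x k) (t k)) ->
  exists M : R, forall k, (1 <= k)%N -> enorm (x k) <= M.
Proof.
move=> _ gpos cS _ _ t1pos taupos Tpos /andP[em0 em1] ep1 _ _ _ hmin ht1 hT1 hx1
  step mono.
have tb : forall k, (1 <= k)%N -> tau <= t k <= T.
  elim=> [//|k IH] _.
  case: (posnP k) => [->|kpos]; first by rewrite ht1 hT1.
  have /andP[tk1 tk2] := IH kpos.
  have tk0 : 0 < t k by exact: lt_le_trans tk1.
  have [_ _ _ ->] := step k kpos.
  case: ifP => _.
    rewrite le_min ge_min lexx orbT andbT; apply/andP; split.
      by apply: (le_trans tk1); rewrite ler_peMl ?ltW.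
    exact: (le_trans tk1 tk2).
  rewrite le_max ge_max lexx orbT /=; apply/andP; split.
    by apply: (le_trans _ tk2); rewrite ler_piMl ?ltW.
  exact: (le_trans tk1 tk2).
have mono1 : forall k, (1 <= k)%N -> moreau f (x k) (t k) <= moreau f (x 1%N) (t 1%N).
  elim=> [//|k IH] _.
  case: (posnP k) => [->//|kpos].
  exact: le_trans (mono k kpos) (IH kpos).
have fxs_inf : f xs <= finf f.
  apply: lb_le_inf; first by exists (f xs); exists xs.
  by move=> y [z _ <-]; exact: hmin.
have pobj_ge : forall tt xx z, 0 < tt -> f z <= prox_obj f tt xx z.
  move=> tt xx z tt0; rewrite /prox_obj lerDl divr_ge0 ?sqr_ge0 //.
  by rewrite mulr_ge0 // ltW.
have m1 : moreau f (x 1%N) (t 1%N) <= f xs + gamma.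
  apply: le_trans (_ : prox_obj f (t 1%N) (x 1%N) xs <= _).
    apply: ge_inf; last by exists xs.
    exists (f xs) => y [z _ <-]; apply: le_trans (hmin z) _; exact: pobj_ge.
  rewrite /prox_obj lerD2l.
  move: hx1; set a := enorm _ ^+ 2 => hx1.
  rewrite ler_pdivrMr ?mulr_gt0 // in hx1.
  by rewrite ler_pdivrMr ?mulr_gt0 //; nra.
have key : forall k, (1 <= k)%N ->
    f (xh k) + enorm (xh k - x k) ^+ 2 / (2 * t k) <= f xs + gamma.
  move=> k k1; apply: le_trans m1; apply: le_trans (mono1 k k1).
  have [inp _ _ _] := step k k1.
  apply: lb_le_inf; first by exists (prox_obj f (t k) (x k) (xh k)); exists (xh k).
  by move=> y [z _ <-]; exact: inp.
have tpos : forall k, (1 <= k)%N -> 0 < t k.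
  by move=> k k1; have /andP[h _] := tb k k1; exact: lt_le_trans h.
have [M0 [_ MA]] := compact_bounded cS.
have sub : forall k, (1 <= k)%N -> `|xh k| <= M0 + 1.
  move=> k k1; apply: (MA (M0 + 1)); first lra.
  rewrite /sublevel /=; apply: (@le_trans _ _ (f xs + gamma)); last by rewrite lerD2r.
  apply: le_trans (key k k1); rewrite lerDl divr_ge0 ?sqr_ge0 //.
  by rewrite mulr_ge0 // ltW // tpos.
have dist : forall k, (1 <= k)%N -> enorm (xh k - x k) ^+ 2 <= 2 * T * gamma.
  move=> k k1; have := key k k1; have := hmin (xh k).
  have /andP[_ tT] := tb k k1; have tk := tpos k k1.
  set e := enorm _ ^+ 2 => h1 h2.
  have : e / (2 * t k) <= gamma by lra.
  rewrite ler_pdivrMr ?mulr_gt0 // => h3; nra.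
exists (1 + n%:R * ((1 + 2 * T * gamma) + (M0 + 1)) ^+ 2) => k k1.
apply: (le_trans (enorm_le_norm (x k))); rewrite lerD2l ler_wpM2l //.
have hx : `|x k| <= (1 + 2 * T * gamma) + (M0 + 1).
  have -> : x k = (x k - xh k) + xh k by rewrite subrK.
  apply: le_trans (ler_normD _ _) _; apply: lerD; last exact: sub.
  rewrite distrC; apply: le_trans (norm_le_enorm _) _.
  apply: sq_bound; [exact: enorm_ge0 | exact: dist].
by rewrite lerXn2r ?nnegrE ?normr_ge0 //; apply: le_trans hx.
Qed.
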